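(* Let $X$ be an $n$-dimensional projective space over a field, let $K$ be a $k$-dimensional subspace of $X$ with $-1\le k\le n-3$, let $\mathcal B_{-1}$ be a $(2,1)$-blocking set in $X/K$, and let $H$ be an arbitrary hyperplane of $X$ containing $K$. Then the disjoint union $$\mathcal B=\{T\in\mathrm{Gr}_1(X):\langle K,T\rangle\in\mathcal B_{-1}\}\ \cup\ \{T\in\mathrm{Gr}_1(H): K\cap T\neq\emptyset\}$$ is a $(2,1)$-blocking set in $X$.
   Context: Projective dimension is used (the empty subspace has dimension $-1$); $\mathrm{Gr}_d(Y)$ is the set of $d$-dimensional subspaces of $Y$. For a $k$-dimensional subspace $K$ of $X$, the quotient space $X/K$ is the projective space of dimension $\dim X-k-1$ whose $r$-dimensional subspaces are the $(r+k+1)$-dimensional subspaces of $X$ containing $K$; the span $\langle K,T\rangle$ is regarded as a subspace of $X/K$. A $(2,1)$-blocking set in a projective space $Y$ is a set of lines of $Y$ such that every plane of $Y$ contains at least one of them (in $X/K$: a set of $(k+2)$-subspaces of $X$ containing $K$ such that every $(k+3)$-subspace of $X$ containing $K$ contains one of them). *)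

(* Defs.v *)
From mathcomp Require Import all_boot all_algebra.
Set Implicit Arguments. Unset Strict Implicit. Unset Printing Implicit Defensive.
Import GRing.Theory.
Local Open Scope ring_scope.

(* The n-dimensional projective space X = PG(n, F) is modelled by the vector
   space 'rV[F]_(n.+1); a projective subspace of projective dimension d is a
   vector subspace of vector dimension d+1 (the empty subspace is 0%VS, of
   projective dimension -1). *)
Notation PSub F n := {vspace 'rV[F]_n.+1}.

Definition blocking21 (F : fieldType) (n : nat) (B : PSub F n -> Prop) : Prop :=
  (forall T, B T -> \dim T = 2%N) /\
  (forall P : PSub F n, \dim P = 3%N -> exists T, B T /\ (T <= P)%VS).

(* (2,1)-blocking set in the quotient X/K: a set of (k+2)-subspaces of X
   containing K (vector dim = dim K + 2) such that every (k+3)-subspace of X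
   containing K (vector dim = dim K + 3) contains one of them. *)
Definition quot_blocking21 (F : fieldType) (n : nat) (K : PSub F n)
    (B : PSub F n -> Prop) : Prop :=
  (forall T, B T -> (K <= T)%VS /\ \dim T = (\dim K + 2)%N) /\
  (forall P : PSub F n, (K <= P)%VS -> \dim P = (\dim K + 3)%N ->
     exists T, B T /\ (T <= P)%VS).

Definition prop313_set (F : fieldType) (n : nat) (K H : PSub F n)
    (B1 : PSub F n -> Prop) (T : PSub F n) : Prop :=
  (\dim T = 2%N /\ B1 (K + T)%VS) \/
  (\dim T = 2%N /\ (T <= H)%VS /\ (K :&: T)%VS <> 0%VS).

(* Main.v *)
Require Import Defs.
From mathcomp Require Import all_boot all_algebra.
From mathcomp Require Import zify.
Set Implicit Arguments. Unset Strict Implicit. Unset Printing Implicit Defensive.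
Import GRing.Theory.
Local Open Scope ring_scope.

Lemma line_through (F : fieldType) (n : nat) (U : PSub F n) (v : 'rV[F]_n.+1) :
  (2 <= \dim U)%N -> v != 0 -> v \in U ->
  exists T : PSub F n, \dim T = 2%N /\ v \in T /\ (T <= U)%VS.
Proof.
move=> dU v0 vU.
set D := (U :\: <[v]>)%VS.
have dD : (0 < \dim D)%N.
  have := dimv_cap_compl U <[v]>.
  have := dimvS (capvSr U <[v]>); rewrite dim_vline v0 /D => h1 h2. 
  rewrite -/D in h2 *. simpl in h1. lia.
set w := vpick D.
have w0 : w != 0 by rewrite vpick0 -dimv_eq0 -lt0n.
have wD : w \in D := memv_pick D.
exists (<[v]> + <[w]>)%VS; split; [|split].
- have := dimv_sum_cap <[v]> <[w]>.
  have -> : (<[v]> :&: <[w]> = 0)%VS.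
    apply/eqP; rewrite -subv0 -(capv_diff U <[v]>) capvC.
    by apply: capvS => //; rewrite -memvE.
  by rewrite dimv0 !dim_vline v0 w0 addn0.
- by rewrite memvE addvSl.
- rewrite subv_add -!memvE vU /=.
  by move/subvP: (diffvSl U <[v]>); apply.
Qed.

Theorem proposition3p13 (F : fieldType) (n : nat) (K H : PSub F n)
    (B1 : PSub F n -> Prop) :
  (\dim K + 2 <= n)%N ->
  quot_blocking21 K B1 ->
  \dim H = n -> (K <= H)%VS ->
  (forall T, ~ ((\dim T = 2%N /\ B1 (K + T)%VS) /\
                (\dim T = 2%N /\ (T <= H)%VS /\ (K :&: T)%VS <> 0%VS))) /\
  blocking21 (prop313_set K H B1).
Proof.
move=> hK [Bdim Bblk] dH KH; split.
  move=> T [[dT BT] [_ [_ KT]]]; apply: KT.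
  have [_ dKT] := Bdim _ BT.
  have := dimv_sum_cap K T; rewrite dKT dT => e.
  by apply/eqP; rewrite -dimv_eq0; apply/eqP; lia.
split.
  by move=> T [[]|[]].
move=> P dP.
have dfull : \dim (fullv : PSub F n) = n.+1.
  by rewrite dimvf /dim /= mul1n.
have [KP0|KPn0] := eqVneq (K :&: P)%VS 0%VS.
- have dKP : \dim (K + P) = (\dim K + 3)%N.
    by have := dimv_sum_cap K P; rewrite KP0 dimv0 dP addn0.
  have [T' [BT' T'le]] := Bblk (K + P)%VS (addvSl _ _) dKP.
  have [KT' dT'] := Bdim _ BT'.
  exists (T' :&: P)%VS; split; last exact: capvSr.
  have h1 := dimv_sum_cap T' P.
  have h2 : (\dim (T' + P) <= \dim K + 3)%N.
    by rewrite -dKP; apply: dimvS; rewrite subv_add T'le addvSr.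
  have h3 : (K :&: (T' :&: P) = 0)%VS.
    by apply/eqP; rewrite -subv0 -KP0 capvS // capvSr.
  have h4 := dimv_sum_cap K (T' :&: P); rewrite h3 dimv0 addn0 in h4.
  have h5 : (K + (T' :&: P) <= T')%VS by rewrite subv_add KT' capvSl.
  have h6 := dimvS h5.
  have dT : \dim (T' :&: P) = 2%N by lia.
  left; split => //.
  have -> : (K + T' :&: P)%VS = T' => //.
  apply/eqP; rewrite eqEdim h5 /=; lia.
- set v := vpick (K :&: P)%VS.
  have v0 : v != 0 by rewrite vpick0.
  have vKP : v \in (K :&: P)%VS := memv_pick _.
  move: (vKP); rewrite memv_cap => /andP [vK vP].
  have vH : v \in H by move/subvP: KH; apply.
  have dPH : (2 <= \dim (P :&: H))%N.
    have := dimv_sum_cap P H.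
    have := dimvS (subvf (P + H)%VS); rewrite dfull dP dH; lia.
  have vPH : v \in (P :&: H)%VS by rewrite memv_cap vP vH.
  have [T [dT [vT TPH]]] := line_through dPH v0 vPH.
  exists T; split; last by apply: subv_trans TPH (capvSl _ _).
  right; split => //; split; first by apply: subv_trans TPH (capvSr _ _).
  move=> /eqP; rewrite -subv0 => /subvP /(_ v); rewrite memv_cap vK vT memv0.
  by move=> /(_ isT); apply/negP.
Qed.
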